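(* Let $n\ge 1$, let $\mu,\nu\in\mathbb{R}^n$ be probability vectors, let $\gamma>0$, and let $\phi$ satisfy the Bregman assumption stated in the context. Then for every $\hat X\in\mathcal{T}_\phi(\mu,\nu)$ there exists $C\in\mathbb{R}_+^{n\times n}$ with $\mathcal{F}(C)=\hat X$; that is, the map $\mathcal{F}:\mathbb{R}_+^{n\times n}\to\mathcal{T}_\phi(\mu,\nu)$ is a surjection.
   Context: Probability vectors are vectors with nonnegative entries summing to $1$. $\mathcal{U}(\mu,\nu):=\{X\in\mathbb{R}_+^{n\times n}: X\mathbf{1}=\mu,\ X^\top\mathbf{1}=\nu\}$. Bregman assumption on $\phi:\mathbb{R}\to(-\infty,+\infty]$: its effective domain $I=\operatorname{dom}\phi$ is an interval with $(0,1)\subseteq\operatorname{int}(I)$; $\phi$ is of Legendre type (proper, closed, strictly convex on $\operatorname{int}(\operatorname{dom}\phi)$, and essentially smooth, i.e. differentiable on the nonempty interior of its domain with $|\phi'(x_k)|\to\infty$ whenever $x_k\in\operatorname{int}(\operatorname{dom}\phi)$ converges to a boundary point of the domain); and $\phi$ is $C^1$ on $\operatorname{int}(I)$. For a matrix $X$ with entries in $I$, $\phi(X):=\sum_{i,j}\phi(X_{ij})$. For a cost matrix $C$, $\mathcal{F}(C):=\arg\min_{X\in\mathcal{U}(\mu,\nu)}\{\langle C,X\rangle+\gamma\phi(X)\}$ (the unique minimizer). Set $\phi'_0:=\lim_{x\to0^+}\phi'(x)$ and $\phi'_1:=\lim_{x\to1^-}\phi'(x)$, with values in $[-\infty,+\infty]$.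 The target set is $\mathcal{T}_\phi(\mu,\nu):=\mathcal{U}(\mu,\nu)$ if $\phi'_0,\phi'_1$ are both finite; $\mathcal{U}(\mu,\nu)\cap(0,1]^{n\times n}$ if $\phi'_0=-\infty$ and $\phi'_1$ is finite; $\mathcal{U}(\mu,\nu)\cap[0,1)^{n\times n}$ if $\phi'_0$ is finite and $\phi'_1=+\infty$; $\mathcal{U}(\mu,\nu)\cap(0,1)^{n\times n}$ if $\phi'_0=-\infty$ and $\phi'_1=+\infty$. *)

(* Defs.v *)
From HB Require Import structures.
From mathcomp Require Import all_boot all_order all_algebra.
From mathcomp Require Import all_classical all_reals all_analysis.
Set Implicit Arguments. Unset Strict Implicit. Unset Printing Implicit Defensive.
Import Order.TTheory GRing.Theory Num.Theory.
Import numFieldNormedType.Exports.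
Local Open Scope classical_set_scope.
Local Open Scope ring_scope.

Section Defs.
Variable R : realType.

Definition prob_vec (n : nat) (mu : 'I_n -> R) : Prop :=
  (forall i, 0 <= mu i) /\ \sum_(i < n) mu i = 1.

Definition transport_polytope (n : nat) (mu nu : 'I_n -> R) : set 'M[R]_n :=
  [set X | (forall i j, 0 <= X i j) /\
           (forall i, \sum_(j < n) X i j = mu i) /\
           (forall j, \sum_(i < n) X i j = nu j)].

Definition nonneg_mx (n : nat) (C : 'M[R]_n) : Prop := forall i j, 0 <= C i j.

(* phi : R -> (-oo, +oo], modelled as R -> \bar R. *)
Definition edom (phi : R -> \bar R) : set R := [set x | (phi x < +oo)%E].

(* The real-valued restriction of phi (meaningful on dom phi) and its derivative. *)
Definition phir (phi : R -> \bar R) : R -> R := fun x => fine (phi x).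
Definition dphi (phi : R -> \bar R) : R -> R := derive1 (phir phi).

Definition is_interval_set (I : set R) : Prop :=
  forall x y z, I x -> I y -> x <= z -> z <= y -> I z.

Definition proper_fun (phi : R -> \bar R) : Prop :=
  (forall x, phi x != -oo%E) /\ (exists x, edom phi x).

(* extended-valued convexity on R (convention 0 * (+oo) = 0) *)
Definition econvex (phi : R -> \bar R) : Prop :=
  forall x y t : R, (0 <= t)%R -> (t <= 1)%R ->
    (phi (t * x + (1 - t) * y)%R <= t%:E * phi x + (1 - t)%R%:E * phi y)%E.

Definition strictly_convex_on (phi : R -> \bar R) (D : set R) : Prop :=
  forall x y t : R, D x -> D y -> x != y -> (0 < t)%R -> (t < 1)%R ->
    (phi (t * x + (1 - t) * y)%R < t%:E * phi x + (1 - t)%R%:E * phi y)%E.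

Definition essentially_smooth (phi : R -> \bar R) : Prop :=
  (interior (edom phi) !=set0) /\
  (forall x, interior (edom phi) x -> derivable (phir phi) x 1) /\
  (forall (u : R^nat) (b : R),
      (forall k, interior (edom phi) (u k)) ->
      closure (edom phi) b -> ~ interior (edom phi) b ->
      u @ \oo --> b ->
      (fun k => `|dphi phi (u k)|) @ \oo --> +oo).

Definition legendre (phi : R -> \bar R) : Prop :=
  [/\ proper_fun phi, lower_semicontinuous phi, econvex phi,
      strictly_convex_on phi (interior (edom phi)) & essentially_smooth phi].

Definition bregman_assumption (phi : R -> \bar R) : Prop :=
  [/\ is_interval_set (edom phi),
      `]0, 1[ `<=` interior (edom phi),
      legendre phi &
      (forall x, interior (edom phi) x -> {for x, continuous (dphi phi)})].

Definition objective (n : nat) (phi : R -> \bar R) (gamma : R) (C X : 'M[R]_n)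
  : \bar R :=
  ((\sum_(i < n) \sum_(j < n) C i j * X i j)%:E +
   gamma%:E * \sum_(i < n) \sum_(j < n) phi (X i j))%E.

(* "F(C) = X": X is the unique minimizer of the objective over U(mu,nu). *)
Definition is_F (n : nat) (phi : R -> \bar R) (gamma : R) (mu nu : 'I_n -> R)
  (C X : 'M[R]_n) : Prop :=
  transport_polytope mu nu X /\
  (forall Y, transport_polytope mu nu Y ->
     (objective phi gamma C X <= objective phi gamma C Y)%E) /\
  (forall Y, transport_polytope mu nu Y ->
     (forall Z, transport_polytope mu nu Z ->
        (objective phi gamma C Y <= objective phi gamma C Z)%E) ->
     Y = X).

Definition dphi0_finite (phi : R -> \bar R) : Prop :=
  exists L : R, dphi phi x @[x --> 0^'+] --> L.
Definition dphi0_minfty (phi : R -> \bar R) : Prop :=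
  dphi phi x @[x --> 0^'+] --> -oo.
Definition dphi1_finite (phi : R -> \bar R) : Prop :=
  exists L : R, dphi phi x @[x --> 1^'-] --> L.
Definition dphi1_pinfty (phi : R -> \bar R) : Prop :=
  dphi phi x @[x --> 1^'-] --> +oo.

Definition target_set (n : nat) (phi : R -> \bar R) (mu nu : 'I_n -> R) : set 'M[R]_n :=
  [set X | transport_polytope mu nu X /\
   [\/ dphi0_finite phi /\ dphi1_finite phi,
       [/\ dphi0_minfty phi, dphi1_finite phi & forall i j, 0 < X i j <= 1],
       [/\ dphi0_finite phi, dphi1_pinfty phi & forall i j, 0 <= X i j < 1] |
       [/\ dphi0_minfty phi, dphi1_pinfty phi & forall i j, 0 < X i j < 1]]].

End Defs.

(* Main.v *)
Require Import Defs.
From HB Require Import structures.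
From mathcomp Require Import all_boot all_order all_algebra.
From mathcomp Require Import all_classical all_reals all_analysis.
From mathcomp Require Import ring lra.
Import Order.TTheory GRing.Theory Num.Theory.
Import numFieldNormedType.Exports.
Local Open Scope classical_set_scope.
Local Open Scope ring_scope.
Section S.
Context {R : realType}.
Implicit Types phi : R -> \bar R.
Lemma at_right_finer (a : R) : (a^'+ : set_system R) `=>` a^'.
Proof.
move=> A; rewrite /at_right /dnbhs /within /=.
apply: filterS => x H xa; apply: H; rewrite gt_eqF //.
Qed.
Lemma dirD (f : R -> R) x v : derivable f x 1 -> 'D_v f x = v * derive1 f x.
Proof.
move=> /derivable1_diffP H. rewrite derive1E' // deriveE //.
by rewrite -[in LHS](mulr1 v) -[v * 1]/(v *: 1) linearZ.
Qed.

Lemma edom_fin {phi z} : proper_fun phi -> edom phi z -> phi z = (phir phi z)%:E.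
Proof.
move=> [Hn _] Hz; rewrite /phir fineK // fin_numE Hn /=.
by move: Hz; rewrite /edom /= => /lt_eqF ->.
Qed.

Lemma grad_ineq phi x y : bregman_assumption phi ->
  interior (edom phi) x ->
  ((phir phi x + dphi phi x * (y - x))%:E <= phi y)%E.
Proof.
move=> [Hint H01 [Hp _ Hconv _ [_ [Hder _]]] _] Hx.
have Hxd : edom phi x by apply: interior_subset.
have Hfx := edom_fin Hp Hxd.
case Ey : (phi y) => [py| |]; last 2 first.
- by rewrite leey.
- by move: Hp => [/(_ y)]; rewrite Ey.
set f := phir phi; set v := y - x.
have Hq : forall t, 0 < t -> t <= 1 -> t^-1 *: ((f \o shift x) (t *: v) - f x) <= py - f x.
  move=> t t0 t1.
  have := Hconv y x t (ltW t0) t1.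
  rewrite Ey Hfx -!EFinM -EFinD.
  have -> : t * y + (1 - t) * x = t *: v + x by rewrite /v /GRing.scale /=; ring.
  move=> Hc.
  have Hd : edom phi (t *: v + x) by rewrite /edom /=; apply: le_lt_trans Hc _; exact: ltry.
  move: Hc; rewrite (edom_fin Hp Hd) lee_fin => Hc.
  rewrite /= /GRing.scale /= ler_pdivrMl //.
  rewrite -/f.
  change (t *: v) with (t * v) in Hc; rewrite -/f in Hc; lra.
have Hdv : derivable f x v by apply: diff_derivable; apply/derivable1_diffP; exact: Hder.
have Hl : (fun h => h^-1 *: ((f \o shift x) (h *: v) - f x)) @ 0^' --> 'D_v f x.
  exact: Hdv.
have Hr : (fun h => h^-1 *: ((f \o shift x) (h *: v) - f x)) @ 0^'+ --> 'D_v f x.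
  by move=> A /Hl; apply: at_right_finer.
have : 'D_v f x <= py - f x.
  apply: (cvgr_to_le Hr).
  near=> t; apply: Hq; near: t; [exact: nbhs_right_gt | exact: nbhs_right_ltW].
rewrite dirD; last exact: Hder.
rewrite lee_fin /dphi -/f; lra.
Unshelve. all: by end_near.
Qed.

Lemma strict_eq phi x y : bregman_assumption phi ->
  interior (edom phi) x ->
  phi y = (phir phi x + dphi phi x * (y - x))%:E -> y = x.
Proof.
move=> Hb Hx Ey.
have Hb' := Hb.
move: Hb' => [Hint H01 [Hp _ Hconv Hsc [_ [Hder _]]] _].
have Hfx := edom_fin Hp (interior_subset Hx).
set f := phir phi in Hfx Ey *; set d := dphi phi x in Ey *.
case: (eqVneq y x) => // yx; exfalso.
have v0 : y - x != 0 by rewrite subr_eq0.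
set v := y - x in Ey v0.
have : nbhs x (interior (edom phi)) by have := open_interior (edom phi); rewrite openE; apply.
move=> /nbhs_ballP [e e0 He].
have nv0 : 0 < `|v| by rewrite normr_gt0.
set t := e / (e + `|v|).
have t0 : 0 < t by rewrite /t divr_gt0 // addr_gt0.
have t1 : t < 1 by rewrite /t ltr_pdivrMr ?addr_gt0 // mul1r ltrDl.
have tv : t * `|v| < e.
  rewrite /t mulrAC ltr_pdivrMr ?addr_gt0 //.
  by rewrite mulrDr ltrDr mulr_gt0.
set p := t * v + x.
have Hpi : interior (edom phi) p.
  apply: He; rewrite -ball_normE /ball_ /p.
  rewrite /=; have -> : x - (t * v + x) = - (t * v) by ring.
  by rewrite normrN normrM gtr0_norm.
have Hfp := edom_fin Hp (interior_subset Hpi).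
have fpE : f p = f x + t * (d * v).
  apply/eqP; rewrite eq_le; apply/andP; split.
    have := Hconv y x t (ltW t0) (ltW t1).
    rewrite Ey Hfx.
    have -> : t * y + (1 - t) * x = p by rewrite /p /v; ring.
    rewrite Hfp -!EFinM -EFinD lee_fin => H.
    rewrite -/f in H; lra.
  have := grad_ineq _ _ p Hb Hx; rewrite Hfp lee_fin -/f -/d /p.
  move=> H; lra.
set m := 2^-1 * p + (1 - 2^-1) * x.
have px : p != x.
  apply/eqP => /(congr1 (fun z => z - x)); rewrite /p addrK subrr => /eqP.
  by rewrite mulf_eq0 (negbTE v0) orbF; apply/negP; rewrite gt_eqF.
have := Hsc p x 2^-1 Hpi Hx px; rewrite invr_gt0 ltr0n invf_lt1 ?ltr1n ?ltr0n // => /(_ isT isT).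
rewrite -/m Hfp Hfx -!EFinM -EFinD -/f.
have := grad_ineq _ _ m Hb Hx; rewrite -/f -/d => H1 H2.
have := le_lt_trans H1 H2; rewrite lte_fin fpE /m /p.
lra.
Qed.

Lemma bdry_int phi b (u : R^nat) K : bregman_assumption phi ->
  (forall k, 0 < u k < 1) -> u @ \oo --> b ->
  (\forall k \near \oo, `|dphi phi (u k)| <= K) -> interior (edom phi) b.
Proof.
move=> [Hint H01 [Hp _ Hconv Hsc [_ [Hder Hsm]]] _] Hu ub HK.
have [//|Hn] := pselect (interior (edom phi) b).
have Hui : forall k, interior (edom phi) (u k).
  move=> k; apply: H01; rewrite /= in_itv /=; exact: Hu.
have Hcl : closure (edom phi) b.
  apply: (closed_cvg _ (@closed_closure _ (edom phi))) ub.
  apply: nearW => k; apply: subset_closure; exact: interior_subset.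
have := Hsm u b Hui Hcl Hn ub.
move/cvgryPge/(_ (K + 1)) => HK1.
have [k [H1 H2]] := filter_ex (filterI HK HK1).
move: H1 H2; lra.
Qed.

Lemma norm_close (a b : R) : `|a - b| < 1 -> `|b| <= `|a| + 1.
Proof.
move=> H; have -> : b = a - (a - b) by ring.
apply: le_trans (ler_normB _ _) _; lra.
Qed.

Lemma int0 phi : bregman_assumption phi -> dphi0_finite phi -> interior (edom phi) 0.
Proof.
move=> Hb [L HL].
pose u : R^nat := fun k => harmonic k / 2.
have Hu : forall k, 0 < u k < 1.
  move=> k; rewrite /u; have h0 := harmonic_gt0 (R:=R) k.
  have h1 : harmonic k <= 1 :> R by rewrite /= invf_le1 // ?ler1n ?ltr0n.
  apply/andP; split; first by rewrite divr_gt0.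
  rewrite ltr_pdivrMr //; lra.
have ub : u @ \oo --> 0.
  rewrite -(mul0r (2^-1 : R)); apply: cvgM; [exact: cvg_harmonic | exact: cvg_cst].
apply: (@bdry_int phi 0 u (`|L| + 1) Hb Hu ub).
have := (cvg_at_rightP (dphi phi) 0 L).1 HL u.
move=> /(_ (conj (fun k => proj1 (andP (Hu k))) ub)).
move=> /cvgrPdist_lt /(_ 1 ltr01).
by apply: filterS => k; apply: norm_close.
Qed.

Lemma int1 phi : bregman_assumption phi -> dphi1_finite phi -> interior (edom phi) 1.
Proof.
move=> Hb [L HL].
pose u : R^nat := fun k => 1 - harmonic k / 2.
have Hu : forall k, 0 < u k < 1.
  move=> k; rewrite /u; have h0 := harmonic_gt0 (R:=R) k.
  have h1 : harmonic k <= 1 :> R by rewrite /= invf_le1 // ?ler1n ?ltr0n.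
  apply/andP; split; last by rewrite ltrBlDr ltrDl divr_gt0.
  rewrite subr_gt0 ltr_pdivrMr //; lra.
have ub : u @ \oo --> (1 - 0 * 2^-1 : R).
  apply: cvgB; first exact: cvg_cst.
  apply: cvgM; [exact: cvg_harmonic | exact: cvg_cst].
rewrite mul0r subr0 in ub.
apply: (@bdry_int phi 1 u (`|L| + 1) Hb Hu ub).
have := (cvg_at_leftP (dphi phi) 1 L).1 HL u.
move=> /(_ (conj (fun k => proj2 (andP (Hu k))) ub)).
move=> /cvgrPdist_lt /(_ 1 ltr01).
by apply: filterS => k; apply: norm_close.
Qed.

Lemma le_term {n} {F : 'I_n -> R} i : (forall j, 0 <= F j) -> F i <= \sum_j F j.
Proof. by move=> H; rewrite (bigD1 i) //= lerDl sumr_ge0. Qed.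

Lemma entry_int phi x : bregman_assumption phi -> 0 <= x <= 1 ->
  (x = 0 -> interior (edom phi) 0) -> (x = 1 -> interior (edom phi) 1) ->
  interior (edom phi) x.
Proof.
move=> [_ H01 _ _] /andP[x0 x1] H0 H1.
case: (eqVneq x 0) => [E|xn0]; first by rewrite E; exact: H0.
case: (eqVneq x 1) => [E|xn1]; first by rewrite E; exact: H1.
apply: H01; rewrite /= in_itv /= lt_neqAle eq_sym xn0 x0 lt_neqAle xn1 x1.
done.
Qed.
End S.

Theorem proposition1 (R : realType) (n : nat) (mu nu : 'I_n -> R)
  (gamma : R) (phi : R -> \bar R) :
  (0 < n)%N -> prob_vec mu -> prob_vec nu -> 0 < gamma ->
  bregman_assumption phi ->
  forall Xhat : 'M[R]_n, target_set phi mu nu Xhat ->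
  exists C : 'M[R]_n, nonneg_mx C /\ is_F phi gamma mu nu C Xhat.
Proof.
move=> n0 [mu0 smu] [nu0 snu] g0 Hb X [[X0 [Xr Xc]] Hcase].
have Hb' := Hb; move: Hb' => [_ _ [Hp _ _ _ _] _].
have Xle1 : forall i j, X i j <= 1.
  move=> i j; apply: le_trans (le_term j (X0 i)) _; rewrite Xr -smu; exact: le_term.
have Xint : forall i j, interior (edom phi) (X i j).
  move=> i j; apply: entry_int => //; first by rewrite X0 Xle1.
  - move=> E; case: Hcase => [[h0 _]|[_ _ h]|[h0 _ _]|[_ _ h]];
      try exact: int0 Hb h0; by move: (h i j); rewrite E ltxx.
  - move=> E; case: Hcase => [[_ h1]|[_ h1 _]|[_ _ h]|[_ _ h]];
      try exact: int1 Hb h1; by move: (h i j); rewrite E ltxx andbF.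
set d := fun i j => dphi phi (X i j).
set fX := fun i j => phir phi (X i j).
set M := \sum_(i < n) \sum_(j < n) `|gamma * d i j|.
pose C : 'M[R]_n := \matrix_(i, j) (M - gamma * d i j).
have CE : forall i j, C i j = M - gamma * d i j by move=> i j; rewrite mxE.
exists C; split.
  move=> i j; rewrite CE subr_ge0.
  apply: le_trans (ler_norm _) _.
  apply: le_trans (le_term (F := fun k => `|gamma * d i k|) j _) _.
    by move=> k; exact: normr_ge0.
  apply: (le_term (F := fun i => \sum_(k < n) `|gamma * d i k|) i).
  by move=> k; apply: sumr_ge0 => l _; exact: normr_ge0.
pose LB (Y : 'M[R]_n) := \sum_(i < n) \sum_(j < n)
   (C i j * Y i j + gamma * (fX i j + d i j * (Y i j - X i j))).
have sumS : forall Y, transport_polytope mu nu Y -> \sum_(i < n) \sum_(j < n) Y i j = 1.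
  move=> Y [_ [Yr _]]; rewrite -smu; apply: eq_bigr => i _; exact: Yr.
have LBE : forall Y, LB Y = M * (\sum_(i < n) \sum_(j < n) Y i j) +
    \sum_(i < n) \sum_(j < n) (gamma * fX i j - gamma * d i j * X i j).
  move=> Y; rewrite /LB mulr_sumr -big_split; apply: eq_bigr => i _ /=.
  rewrite mulr_sumr -big_split; apply: eq_bigr => j _ /=; rewrite CE; ring.
have HXp : transport_polytope mu nu X by [].
have LBeq : forall Y, transport_polytope mu nu Y -> LB Y = LB X.
  by move=> Y HY; rewrite !LBE !sumS.
have LBsplit : forall Y, LB Y = \sum_(i < n) \sum_(j < n) C i j * Y i j +
    gamma * \sum_(i < n) \sum_(j < n) (fX i j + d i j * (Y i j - X i j)).
  move=> Y; rewrite /LB mulr_sumr -big_split; apply: eq_bigr => i _ /=.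
  by rewrite mulr_sumr -big_split.
have objX : objective phi gamma C X = (LB X)%:E.
  rewrite /objective.
  have -> : (\sum_(i < n) \sum_(j < n) phi (X i j) = (\sum_(i < n) \sum_(j < n) fX i j)%:E)%E.
    rewrite -sumEFin; apply: eq_bigr => i _; rewrite -sumEFin; apply: eq_bigr => j _.
    exact: edom_fin Hp (interior_subset (Xint i j)).
  rewrite -EFinM -EFinD LBsplit; congr (_%:E); congr (_ + gamma * _).
  by apply: eq_bigr => i _; apply: eq_bigr => j _; rewrite subrr mulr0 addr0.
have rowLB : forall (Y : 'M[R]_n) i,
    (\sum_(j < n) ((fX i j + d i j * (Y i j - X i j))%:E) <= \sum_(j < n) phi (Y i j))%E.
  move=> Y i; apply: lee_sum => j _; exact: grad_ineq Hb (Xint i j).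
have objY : forall Y, ((LB Y)%:E <= objective phi gamma C Y)%E.
  move=> Y; rewrite /objective LBsplit EFinD EFinM; apply: leeD => //.
  apply: lee_wpmul2l; first by rewrite lee_fin ltW.
  rewrite -sumEFin; apply: lee_sum => i _; rewrite -sumEFin; exact: rowLB.
split; first exact: HXp.
split.
  by move=> Y HY; rewrite objX -(LBeq Y HY); exact: objY.
move=> Y HY Hmin.
have HYX := Hmin X HXp; rewrite objX in HYX.
have Hfin : forall i j, phi (Y i j) != +oo%E.
  move=> i j; apply/negP => /eqP Hij.
  have Hrow : forall k, (\sum_(l < n) phi (Y k l) != -oo)%E.
    move=> k; rewrite -ltNye; apply: lt_le_trans (rowLB Y k); rewrite sumEFin; exact: ltNyr.
  have Hr : (\sum_(l < n) phi (Y i l) = +oo)%E.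
    apply/esum_eqyP; first by move=> l _; exact: Hp.1.
    by exists j; split => //; exact: mem_index_enum.
  have Hs : (\sum_(k < n) \sum_(l < n) phi (Y k l) = +oo)%E.
    apply/esum_eqyP; first by move=> k _; exact: Hrow.
    by exists i; split => //; exact: mem_index_enum.
  move: HYX; rewrite /objective Hs mulry gtr0_sg // mul1e addey // leye_eq.
have Yfin : forall i j, phi (Y i j) = (phir phi (Y i j))%:E.
  move=> i j; apply: (@edom_fin R phi (Y i j) Hp); rewrite /edom /= ltey; exact: Hfin.
pose q i j := phir phi (Y i j) - (fX i j + d i j * (Y i j - X i j)).
have q0 : forall i j, 0 <= q i j.
  move=> i j; have := grad_ineq _ _ (Y i j) Hb (Xint i j); rewrite Yfin lee_fin.
  by rewrite /q subr_ge0.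
have Sq : \sum_(i < n) \sum_(j < n) q i j <= 0.
  move: HYX; rewrite /objective.
  have -> : (\sum_(i < n) \sum_(j < n) phi (Y i j) = (\sum_(i < n) \sum_(j < n) phir phi (Y i j))%:E)%E.
    rewrite -sumEFin; apply: eq_bigr => i _; rewrite -sumEFin; apply: eq_bigr => j _.
    exact: Yfin.
  rewrite -EFinM -EFinD lee_fin -(LBeq Y HY) LBsplit lerD2l (ler_pM2l g0).
  move=> H; rewrite /q; under eq_bigr do rewrite sumrB.
  by rewrite sumrB subr_le0.
have Sq0 : \sum_(i < n) \sum_(j < n) q i j = 0.
  by apply/le_anti; rewrite Sq /=; apply: sumr_ge0 => i _; apply: sumr_ge0.
apply/matrixP => i j.
have Hrow0 : forall i, \sum_(j < n) q i j = 0.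
  have Hnn : forall k, (predT : pred 'I_n) k -> 0 <= \sum_(l < n) q k l.
    by move=> k _; apply: sumr_ge0 => l _; exact: q0.
  by move=> k; have := psumr_eq0P Hnn; move=> /(_ Sq0 k isT).
have Hnn2 : forall l, (predT : pred 'I_n) l -> 0 <= q i l by move=> l _; exact: q0.
have : q i j = 0 by apply: (psumr_eq0P Hnn2 (Hrow0 i)).
rewrite /q => /eqP; rewrite subr_eq0 => /eqP Eq.
apply: strict_eq Hb (Xint i j) _.
by rewrite Yfin Eq.
Qed.
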